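(* Let $s\ge 2$. There exists a constant $c>0$ (depending on $s$) such that $A(L,\mathbf 0)=O(2^{-cL})$ as $L\to\infty$; that is, $\|t\|_{U^s[2^L]}^{2^s}=O(2^{-cL})$.
   Context: Let $t(n)=(-1)^{s_2(n)}$ be the Thue-Morse sequence ($s_2$ = binary digit sum). Write $[M]=\{0,\dots,M-1\}$ and $\omega\cdot\mathbf h=\sum_{i=1}^s\omega_ih_i$. $A(L,\mathbf 0)=\mathbb{E}_{n,\mathbf h}\prod_{\omega\in\{0,1\}^s}t(n+\omega\cdot\mathbf h)$, the expectation over all $n\in\mathbb{Z}$, $\mathbf h\in\mathbb{Z}^s$ with $\{n+\omega\cdot\mathbf h:\omega\in\{0,1\}^s\}\subset[2^L]$; this equals $\|t\|_{U^s[2^L]}^{2^s}$, the $2^s$-th power of the Gowers $U^s$ norm of $t$ on $[2^L]$. *)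

(* Defs.v *)
From HB Require Import structures.
From mathcomp Require Import all_boot all_order all_algebra.
From mathcomp Require Import reals exp.
Set Implicit Arguments. Unset Strict Implicit. Unset Printing Implicit Defensive.
Import Order.TTheory GRing.Theory Num.Theory.
Local Open Scope ring_scope.

(* binary digit sum s_2(n): bit i of n is odd (n %/ 2^i); bits i > n vanish *)
Definition s2 (n : nat) : nat := (\sum_(i < n.+1) odd (n %/ 2 ^ i))%N.

(* Thue-Morse t(n) = (-1)^{s_2(n)}, for n : int (only n >= 0 is ever used:
   on negative integers we evaluate at |n|, which never occurs below). *)
Definition tm (R : ringType) (z : int) : R := (-1) ^+ s2 `|z|%N.

(* shift vector h in Z^s, encoded by k : 'I_s -> 'I_(2M) via h_i = k_i - M,
   i.e. h_i ranges over [-M, M-1], which contains every admissible h_i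
   (admissibility forces |h_i| <= M-1). *)
Definition hvec (s M : nat) (k : {ffun 'I_s -> 'I_(2 * M)}) (i : 'I_s) : int :=
  (k i)%:Z - M%:Z.

Definition corner (s : nat) (n : int) (h : 'I_s -> int)
  (w : {ffun 'I_s -> bool}) : int :=
  n + \sum_(i < s) (w i)%:Z * h i.

Definition admissible (s M : nat) (n : int) (h : 'I_s -> int) : bool :=
  [forall w : {ffun 'I_s -> bool},
     (0 <= corner n h w) && (corner n h w < M%:Z)].

(* A(L,0) = E_{n,h} prod_omega t(n + omega.h), expectation over all admissible
   (n,h) in Z x Z^s with M = 2^L  (n ranges over [M] since omega = 0 is a corner) *)
Definition A0 (R : realType) (s L : nat) : R :=
  let M := (2 ^ L)%N in
  (\sum_(n < M) \sum_(k : {ffun 'I_s -> 'I_(2 * M)} | admissible M n%:Z (hvec k))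
      \prod_(w : {ffun 'I_s -> bool}) tm R (corner n%:Z (hvec k) w))
  / (#|[set nk : 'I_M * {ffun 'I_s -> 'I_(2 * M)} |
         admissible M (nk.1 : nat)%:Z (hvec nk.2)]|)%:R.

(* Main.v *)
Require Import Defs.
From HB Require Import structures.
From mathcomp Require Import all_boot all_order all_algebra.
From mathcomp Require Import reals exp.
From mathcomp Require Import sequences zify ring lra.
Import Order.TTheory GRing.Theory Num.Theory.
Local Open Scope ring_scope.
Set Implicit Arguments. Unset Strict Implicit. Unset Printing Implicit Defensive.

Definition bsum (n K : nat) : nat := (\sum_(0 <= i < K) odd (n %/ 2 ^ i))%N.

Lemma bsum_stable n K : (n <= K)%N -> bsum n K = bsum n n.
Proof.
move=> nK; rewrite /bsum (@big_cat_nat _ _ _ n 0 K) /= ?leq0n //.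
rewrite [X in (_ + X)%N]big_nat_cond [X in (_ + X)%N]big1 ?addn0 // => i /andP[/andP[ni _] _].
rewrite divn_small //; apply: (leq_trans (ltn_expl n (ltnSn 1))).
by rewrite leq_exp2l.
Qed.

Lemma s2E n : s2 n = bsum n n.
Proof.
have -> : s2 n = bsum n n.+1 by rewrite /bsum big_mkord.
exact: bsum_stable.
Qed.

Lemma s2_2 y (b : bool) : s2 (b + 2 * y) = (b + s2 y)%N.
Proof.
rewrite !s2E -(@bsum_stable (b + 2*y) (b + 2*y).+1) //.
rewrite /bsum big_nat_recl //= expn0 divn1.
have -> : odd (b + 2 * y) = b by rewrite oddD oddM; case: b.
congr (_ + _)%N.
have -> : (\sum_(0 <= i < b + 2 * y) odd ((b + 2 * y) %/ 2 ^ i.+1))%N = bsum y (b + 2 * y).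
  rewrite /bsum; apply: eq_bigr => i _.
  rewrite expnS divnMA.
  have -> : ((b + 2 * y) %/ 2 = y)%N by rewrite addnC mulnC divnMDl // divn_small ?addn0 // ltnS leq_b1.
  by [].
apply: bsum_stable; apply: (leq_trans _ (leq_addl _ _)); exact: leq_pmull.
Qed.


Section T.
Variable R : realType.

Definition tn (n : nat) : R := (-1) ^+ s2 n.

Lemma tn2 y (b : bool) : tn (b + 2 * y) = (-1) ^+ b * tn y.
Proof. by rewrite /tn s2_2 exprD. Qed.

Lemma tn_sq n : tn n * tn n = 1.
Proof. by rewrite /tn -exprD addnn -mul2n exprM sqrrN expr1n expr1n. Qed.

Lemma tn_split m y r : (r < 2 ^ m)%N -> tn (r + 2 ^ m * y) = tn r * tn y.
Proof.
elim: m r => [|m IH] r hr.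
  move: hr; rewrite expn0 ltnS leqn0 => /eqP ->.
  by rewrite add0n mul1n /tn (_ : s2 0 = 0%N) ?expr0 ?mul1r // /s2 big_ord1.
have hr' : (r %/ 2 < 2 ^ m)%N by rewrite ltn_divLR // mulnC -expnS.
have rE : r = (odd r + 2 * (r %/ 2))%N by rewrite {1}(divn_eq r 2) modn2 addnC mulnC.
rewrite {1}rE expnS -mulnA -addnA -mulnDr tn2 IH // {3}rE tn2 mulrA.
by [].
Qed.

Definition gL (L : nat) (z : int) : R :=
  if (0 <= z) && (z < (2 ^ L)%:Z) then tm R z else 0.

Lemma tmE (n : nat) : tm R n%:Z = tn n.
Proof. by []. Qed.

Lemma gL_split L m (Y : int) (r : nat) : (r < 2 ^ m)%N ->
  gL (L + m) ((2 ^ m)%:Z * Y + r%:Z) = tn r * gL L Y.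
Proof.
move=> hr; rewrite /gL.
case: (ltrP Y 0) => hY.
  have -> : (0 <= (2 ^ m)%:Z * Y + r%:Z) = false.
    apply/negbTE; rewrite -ltNge.
    have h1 : (2 ^ m)%:Z * Y <= - (2 ^ m)%:Z.
      by rewrite -mulrN1 ler_pM2l ?ltz_nat ?expn_gt0 // -ltzD1 addrC subrr.
    by apply: (le_lt_trans (lerD h1 (lexx _))); rewrite addrC subr_lt0 ltz_nat.
  by rewrite /= mulr0.
case: (ltrP Y (2 ^ L)%:Z) => hYL.
  have [y eY] : exists y : nat, Y = y%:Z by exists `|Y|%N; rewrite gez0_abs.
  subst Y.
  have -> : (2 ^ m)%:Z * y%:Z + r%:Z = (r + 2 ^ m * y)%N%:Z by rewrite addrC PoszD PoszM.
  rewrite ltz_nat.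
  have -> : (r + 2 ^ m * y < 2 ^ (L + m))%N.
    move: hYL; rewrite ltz_nat => hy.
    apply: (@leq_trans (2 ^ m + 2 ^ m * y)); first by rewrite ltn_add2r.
    by rewrite addnC -mulnSr expnD [X in (_ <= X)%N]mulnC leq_mul2l hy orbT.
  by rewrite !tmE tn_split.
rewrite andbF.
have -> : ((2 ^ m)%:Z * Y + r%:Z < (2 ^ (L + m))%:Z) = false.
  apply/negbTE; rewrite -leNgt.
  have h1 : (2 ^ (L + m))%:Z <= (2 ^ m)%:Z * Y.
    by rewrite expnD mulnC PoszM ler_pM2l ?ltz_nat ?expn_gt0.
  by apply: (le_trans h1); rewrite lerDl.
by rewrite andbF mulr0.
Qed.
End T.
Section Split.
Variables (R : nmodType) (a b N : nat).
Hypothesis eN : N = (a * b)%N.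
Hypothesis b0 : (0 < b)%N.

Lemma mk_lt (x : 'I_a) (y : 'I_b) : (x * b + y < N)%N.
Proof.
rewrite eN; apply: (@leq_trans (x * b + b)); first by rewrite ltn_add2l.
by rewrite -mulSnr leq_mul2r ltn_ord orbT.
Qed.
Definition omk (x : 'I_a) (y : 'I_b) : 'I_N := Ordinal (mk_lt x y).
Lemma q_lt (z : 'I_N) : (z %/ b < a)%N.
Proof. by rewrite ltn_divLR // -eN. Qed.
Definition oq (z : 'I_N) : 'I_a := Ordinal (q_lt z).
Definition orr (z : 'I_N) : 'I_b := Ordinal (ltn_pmod z b0).

Lemma omkK x y : oq (omk x y) = x /\ orr (omk x y) = y.
Proof.
split; apply: val_inj => /=.
  by rewrite divnMDl // divn_small ?addn0.
by rewrite modnMDl modn_small.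
Qed.
Lemma oqrK z : omk (oq z) (orr z) = z.
Proof. by apply: val_inj => /=; rewrite -divn_eq. Qed.

Lemma sum_ord_split (F : nat -> R) :
  \sum_(n < N) F n = \sum_(i < a) \sum_(j < b) F (i * b + j)%N.
Proof.
rewrite pair_big /=.
rewrite (reindex (fun p : 'I_a * 'I_b => omk p.1 p.2)) //=.
exists (fun z => (oq z, orr z)) => [[x y] _ | z _] /=; last exact: oqrK.
by case: (omkK x y) => -> ->.
Qed.

Lemma sum_ffun_split (I : finType) (F : {ffun I -> nat} -> R) :
  \sum_(k : {ffun I -> 'I_N}) F [ffun i => k i : nat] =
  \sum_(k1 : {ffun I -> 'I_a}) \sum_(k2 : {ffun I -> 'I_b})
      F [ffun i => k1 i * b + k2 i]%N.
Proof.
rewrite pair_big /=.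
rewrite (reindex (fun p : {ffun I -> 'I_a} * {ffun I -> 'I_b} =>
            [ffun i => omk (p.1 i) (p.2 i)])) /=.
  by apply: eq_bigr => p _; congr F; apply/ffunP => i; rewrite !ffunE.
exists (fun z => ([ffun i => oq (z i)], [ffun i => orr (z i)])) => [[x y] _ | z _] /=.
  by congr pair; apply/ffunP => i; rewrite !ffunE; case: (omkK (x i) (y i)).
by apply/ffunP => i; rewrite !ffunE oqrK.
Qed.
End Split.


Section Rec.
Variables (R : realType) (s : nat).
Notation W := {ffun 'I_s -> bool}.

Lemma Posz_sum (I : finType) (f : I -> nat) : Posz (\sum_(i : I) f i)%N = \sum_(i : I) Posz (f i).
Proof. by apply: (big_morph Posz PoszD). Qed.

Definition cK (L n : nat) (kk : {ffun 'I_s -> nat}) (w : W) : int :=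
  n%:Z + \sum_(i < s) (w i)%:Z * ((kk i)%:Z - (2 ^ L)%:Z).

Definition G (L : nat) (q : W -> nat) : R :=
  \sum_(n < 2 ^ L) \sum_(k : {ffun 'I_s -> 'I_(2 * 2 ^ L)})
     \prod_(w : W) gL R L (corner (n : nat)%:Z (hvec k) w + (q w)%:Z).

Lemma GE L q : G L q = \sum_(n < 2 ^ L) \sum_(k : {ffun 'I_s -> 'I_(2 * 2 ^ L)})
     \prod_(w : W) gL R L (cK L n [ffun i => k i : nat] w + (q w)%:Z).
Proof.
apply: eq_bigr => n _; apply: eq_bigr => k _; apply: eq_bigr => w _.
by rewrite /corner /cK /hvec; congr (gL _ _ (_ + _ + _)); apply: eq_bigr => i _; rewrite ffunE.
Qed.

Definition D m (q : W -> nat) (E : nat) (F : {ffun 'I_s -> 'I_(2 ^ m)}) (w : W) : nat :=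
  (E + \sum_(i < s) (w i) * F i + q w)%N.

Lemma cK_split L m n1 E (k1 : {ffun 'I_s -> nat}) (F : {ffun 'I_s -> 'I_(2 ^ m)}) q w :
  cK (L + m) (n1 * 2 ^ m + E) [ffun i => k1 i * 2 ^ m + F i]%N w + (q w)%:Z =
  (2 ^ m)%:Z * (cK L n1 k1 w + (D q E F w %/ 2 ^ m)%:Z) + (D q E F w %% 2 ^ m)%:Z.
Proof.
have hd : (D q E F w)%:Z = (D q E F w %/ 2 ^ m)%:Z * (2 ^ m)%:Z + (D q E F w %% 2 ^ m)%:Z.
  by rewrite -PoszM -PoszD -divn_eq.
transitivity ((2 ^ m)%:Z * cK L n1 k1 w + (D q E F w)%:Z); last by rewrite hd; ring.
rewrite /D /cK !PoszD Posz_sum ?PoszD ?PoszM mulrDr mulr_sumr.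
have -> : \sum_(i < s) (w i)%:Z * ((([ffun i0 => k1 i0 * 2 ^ m + F i0]%N) i)%:Z - (2 ^ (L + m))%:Z)
   = \sum_(i < s) (2 ^ m)%:Z * ((w i)%:Z * ((k1 i)%:Z - (2 ^ L)%:Z)) + \sum_(i < s) ((w i * F i)%N)%:Z.
  rewrite -big_split /=; apply: eq_bigr => i _.
  rewrite ffunE expnD !PoszD !PoszM; ring.
ring.
Qed.
Lemma cK_split' L m n1 E a (k1 : {ffun 'I_s -> 'I_a}) (F : {ffun 'I_s -> 'I_(2 ^ m)}) q w :
  cK (L + m) (n1 * 2 ^ m + E) [ffun i => k1 i * 2 ^ m + F i]%N w + (q w)%:Z =
  (2 ^ m)%:Z * (cK L n1 [ffun i => k1 i : nat] w + (D q E F w %/ 2 ^ m)%:Z) + (D q E F w %% 2 ^ m)%:Z.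
Proof.
rewrite -cK_split; congr (cK _ _ _ _ + _); apply/ffunP => i; by rewrite !ffunE.
Qed.

Lemma G_rec L m q : G (L + m) q =
  \sum_(E < 2 ^ m) \sum_(F : {ffun 'I_s -> 'I_(2 ^ m)})
     (\prod_(w : W) tn R (D q E F w %% 2 ^ m)%N) * G L (fun w => D q E F w %/ 2 ^ m)%N.
Proof.
have m0 : (0 < 2 ^ m)%N by rewrite expn_gt0.
rewrite GE.
rewrite (@sum_ord_split _ (2 ^ L) (2 ^ m) (2 ^ (L + m)) (expnD 2 L m) m0
  (fun n : nat => \sum_(k : {ffun 'I_s -> 'I_(2 * 2 ^ (L + m))})
     \prod_(w : W) gL R (L + m) (cK (L + m) n [ffun i => k i : nat] w + (q w)%:Z))).
have eN : (2 * 2 ^ (L + m) = 2 * 2 ^ L * 2 ^ m)%N by rewrite expnD mulnA.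
under eq_bigr => n1 _ do under eq_bigr => E _ do
  rewrite (@sum_ffun_split _ (2 * 2 ^ L) (2 ^ m) _ eN m0 'I_s
    (fun kk => \prod_(w : W) gL R (L + m) (cK (L + m) (n1 * 2 ^ m + E) kk w + (q w)%:Z))).
transitivity (\sum_(n1 < 2 ^ L) \sum_(E < 2 ^ m) \sum_(k1 : {ffun 'I_s -> 'I_(2 * 2 ^ L)})
   \sum_(F : {ffun 'I_s -> 'I_(2 ^ m)})
     (\prod_(w : W) tn R (D q E F w %% 2 ^ m)%N) *
     \prod_(w : W) gL R L (cK L n1 [ffun i => k1 i : nat] w + (D q E F w %/ 2 ^ m)%N%:Z)).
  apply: eq_bigr => n1 _; apply: eq_bigr => E _; apply: eq_bigr => k1 _; apply: eq_bigr => F _.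
  rewrite -big_split /=; apply: eq_bigr => w _.
  by rewrite cK_split' gL_split // ltn_pmod.
rewrite exchange_big /=; apply: eq_bigr => E _.
under eq_bigr => n1 _ do rewrite exchange_big /=.
rewrite exchange_big /=; apply: eq_bigr => F _.
rewrite GE mulr_sumr; apply: eq_bigr => n1 _.
by rewrite mulr_sumr.
Qed.
End Rec.


Section Pat.
Variable R : realType.

Definition ext s (b : bool) (w : {ffun 'I_s -> bool}) : {ffun 'I_s.+1 -> bool} :=
  [ffun i => oapp w b (unlift ord0 i)].

Lemma ext0 s b w : @ext s b w ord0 = b.
Proof. by rewrite ffunE unlift_none. Qed.
Lemma extS s b w j : @ext s b w (lift ord0 j) = w j.
Proof. by rewrite ffunE liftK. Qed.

Lemma prod_ext s (P : {ffun 'I_s.+1 -> bool} -> R) :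
  \prod_(w : {ffun 'I_s.+1 -> bool}) P w =
  \prod_(w : {ffun 'I_s -> bool}) (P (ext false w) * P (ext true w)).
Proof.
rewrite (reindex (fun p : bool * {ffun 'I_s -> bool} => ext p.1 p.2)) /=; last first.
  exists (fun w => (w ord0, [ffun j => w (lift ord0 j)])) => [[b w] _ | w _] /=.
    by rewrite ext0; congr pair; apply/ffunP => j; rewrite ffunE extS.
  apply/ffunP => i; rewrite ffunE; case: unliftP => [j ->|->] /=; by rewrite ?ffunE.
rewrite -(pair_big xpredT xpredT (fun b w => P (ext b w))) /= big_bool /= -big_split /=.
by apply: eq_bigr => w _; rewrite mulrC.
Qed.

Definition xb s (w : {ffun 'I_s -> bool}) : nat := (\sum_(j < s) w j * 2 ^ j)%N.

Lemma xb_ext s b w : xb (@ext s b w) = (b + 2 * xb w)%N.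
Proof.
rewrite /xb big_ord_recl ext0 expn0 muln1; congr (_ + _)%N.
rewrite big_distrr /=; apply: eq_bigr => j _.
by rewrite extS expnS mulnCA.
Qed.

Lemma tn1 : tn R 1 = -1.
Proof. by rewrite -[1%N]/(true + 2 * 0)%N tn2 expr1 (_ : tn R 0 = 1) ?mulr1 // /tn /s2 big_ord1. Qed.
Lemma tn0 : tn R 0 = 1.
Proof. by rewrite /tn /s2 big_ord1. Qed.

Lemma pat_aux s : \prod_(w : {ffun 'I_s -> bool}) (tn R (xb w) * tn R (xb w).+1) = -1.
Proof.
elim: s => [|s IH].
  rewrite (eq_bigr (fun _ => tn R 0 * tn R 1)); last first.
    by move=> w _; rewrite /xb big_ord0.
  by rewrite prodr_const card_ffun card_bool card_ord expn0 expr1 tn0 tn1 mul1r.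
rewrite prod_ext -IH; apply: eq_bigr => w _.
rewrite !xb_ext /=.
have e2 : (0 + 2 * xb w).+1 = (true + 2 * xb w)%N by rewrite add0n add1n.
have e4 : (1 + 2 * xb w).+1 = (false + 2 * (xb w).+1)%N by rewrite add0n mulnS add1n.
have e1 : (0 + 2 * xb w)%N = (false + 2 * xb w)%N by [].
have e3 : (1 + 2 * xb w)%N = (true + 2 * xb w)%N by [].
rewrite e2 e4 e1 e3.
rewrite !tn2 /= !expr0 !expr1 !mul1r.
have := tn_sq R (xb w); move: (tn R (xb w)) (tn R (xb w).+1) => a c h.
have -> : a * (-1 * a) * (-1 * a * c) = (a * a) * (a * c) by ring.
by rewrite h mul1r.
Qed.

Lemma ext_eta s (w : {ffun 'I_s.+1 -> bool}) : w = ext (w ord0) [ffun j => w (lift ord0 j)].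
Proof. apply/ffunP => i; rewrite ffunE; case: unliftP => [j ->|->] /=; by rewrite ?ffunE. Qed.

Lemma xb_lt s w : (@xb s w < 2 ^ s)%N.
Proof.
elim: s w => [|s IH] w; first by rewrite /xb big_ord0.
rewrite (ext_eta w) xb_ext expnS.
have := IH [ffun j => w (lift ord0 j)]; case: (w ord0) => /=; lia.
Qed.

Definition hp s : {ffun 'I_s.+1 -> nat} := [ffun i : 'I_s.+1 => oapp (fun j : 'I_s => 2 ^ j)%N 1%N (unlift ord0 i)].

Lemma X_ext s b w : (\sum_(i < s.+1) (@ext s b w i) * hp s i)%N = (b + xb w)%N.
Proof.
rewrite big_ord_recl ext0 ffunE unlift_none /= muln1; congr (_ + _)%N.
by apply: eq_bigr => j _; rewrite extS ffunE liftK.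
Qed.

Lemma pat s : \prod_(w : {ffun 'I_s.+1 -> bool}) tn R (\sum_(i < s.+1) w i * hp s i)%N = -1.
Proof.
rewrite prod_ext -(pat_aux s); apply: eq_bigr => w _.
by rewrite !X_ext add0n add1n.
Qed.

Lemma X_lt s (w : {ffun 'I_s.+1 -> bool}) : (\sum_(i < s.+1) w i * hp s i < 2 ^ s.+1)%N.
Proof.
rewrite (ext_eta w) X_ext expnS.
have := xb_lt [ffun j => w (lift ord0 j)]; case: (w ord0) => /=; lia.
Qed.

Lemma hp_le s i : (hp s i <= 2 ^ s)%N.
Proof.
rewrite ffunE; case: unliftP => [j _|_] /=; last by rewrite expn_gt0.
by rewrite leq_exp2l // ltnW.
Qed.
End Pat.


Section Bound.
Variables (R : realType) (s : nat).
Notation S := s.+1.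
Notation W := {ffun 'I_S -> bool}.

Lemma normr_tn n : `|tn R n| = 1.
Proof. by rewrite /tn normrX normrN1 expr1n. Qed.

Lemma norm_gL L z : `|gL R L z| <= 1.
Proof. by rewrite /gL; case: ifP => _; rewrite ?normr0 // /tm normr_tn. Qed.

Lemma norm_prod_le1 (I : finType) (f : I -> R) : (forall i, `|f i| <= 1) -> `|\prod_i f i| <= 1.
Proof.
move=> h; apply: (big_ind (fun x => `|x| <= 1)); first by rewrite normr1.
  by move=> x y hx hy; rewrite normrM mulr_ile1.
by move=> i _; exact: h.
Qed.

Lemma G_triv L q : `|G R L (q : W -> nat)| <= (2 ^ L * (2 * 2 ^ L) ^ S)%:R.
Proof.
rewrite /G; apply: (le_trans (ler_norm_sum _ _ _)).
apply: (@le_trans _ _ (\sum_(n < 2 ^ L) ((2 * 2 ^ L) ^ S)%:R)).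
  apply: ler_sum => n _; apply: (le_trans (ler_norm_sum _ _ _)).
  apply: (@le_trans _ _ (\sum_(k : {ffun 'I_S -> 'I_(2 * 2 ^ L)}) 1)).
    by apply: ler_sum => k _; apply: norm_prod_le1 => w; exact: norm_gL.
  by rewrite sumr_const card_ffun card_ord card_ord.
by rewrite sumr_const card_ord -mulrnA mulnC.
Qed.

Lemma G_ext L (q1 q2 : W -> nat) : (forall w, q1 w = q2 w) -> G R L q1 = G R L q2.
Proof.
move=> h; apply: eq_bigr => n _; apply: eq_bigr => k _; apply: eq_bigr => w _.
by rewrite h.
Qed.

Variable k0 : nat.
Hypothesis hk0 : (S.+2 <= 2 ^ k0)%N.
Let m := (k0 + S)%N.
Definition Qok (q : W -> nat) := forall w, (q w < 2 ^ k0)%N.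

Lemma m0 : (0 < 2 ^ m)%N. Proof. by rewrite expn_gt0. Qed.
Lemma k0m : (2 ^ k0 <= 2 ^ m)%N. Proof. by rewrite leq_exp2l // leq_addr. Qed.

Lemma Qok_step q (E : 'I_(2 ^ m)) (F : {ffun 'I_S -> 'I_(2 ^ m)}) : Qok q -> Qok (fun w => D q E F w %/ 2 ^ m)%N.
Proof.
move=> hq w /=; rewrite ltn_divLR ?m0 //.
apply: (@leq_trans (S.+2 * 2 ^ m)); last first.
  by rewrite leq_mul2r hk0 orbT.
rewrite /D.
have h1 : (\sum_(i < S) w i * F i <= S * 2 ^ m)%N.
  apply: (@leq_trans (\sum_(i < S) 2 ^ m)).
    apply: leq_sum => i _; apply: (@leq_trans (F i)); first by case: (w i); rewrite ?mul1n ?mul0n.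
    exact: ltnW.
  by rewrite sum_nat_const card_ord.
have h2 := ltn_ord E.
have h3 : (q w < 2 ^ m)%N by apply: leq_trans (hq w) k0m.
rewrite !mulSn; lia.
Qed.
Lemma hF1_lt (i : 'I_S) : (2 ^ k0 * hp s i < 2 ^ m)%N.
Proof.
apply: (@leq_trans (2 ^ k0 * 2 ^ S)); last by rewrite /m expnD.
by rewrite ltn_mul2l expn_gt0 /= (leq_ltn_trans (hp_le i)) // ltn_exp2l.
Qed.
Definition E0 : 'I_(2 ^ m) := Ordinal m0.
Definition F0 : {ffun 'I_S -> 'I_(2 ^ m)} := [ffun => E0].
Definition F1 : {ffun 'I_S -> 'I_(2 ^ m)} := [ffun i => Ordinal (hF1_lt i)].
Definition Xw (w : W) := (\sum_(i < S) w i * hp s i)%N.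

Lemma D0 q w : D q 0 F0 w = q w.
Proof. by rewrite /D big1 // => i _; rewrite ffunE muln0. Qed.

Lemma D1 q w : D q 0 F1 w = (q w + 2 ^ k0 * Xw w)%N.
Proof.
rewrite /D /Xw add0n addnC big_distrr /=; congr (_ + _)%N.
by apply: eq_bigr => i _; rewrite ffunE /= mulnCA.
Qed.

Lemma D1_lt q w : Qok q -> (D q 0 F1 w < 2 ^ m)%N.
Proof.
move=> hq; rewrite D1.
apply: (@leq_trans (2 ^ k0 * (Xw w).+1)).
  by rewrite mulnS ltn_add2r hq.
by rewrite /m expnD leq_mul2l X_lt orbT.
Qed.

Lemma F10 : F1 != F0.
Proof.
apply/negP => /eqP /ffunP /(_ ord0); rewrite !ffunE => /(congr1 val) /=.
rewrite ffunE unlift_none /= muln1 ffunE /= => /eqP; by rewrite expn_eq0.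
Qed.

Lemma step L (B : R) q : (forall q', Qok q' -> `|G R L q'| <= B) -> Qok q ->
  `|G R (L + m) q| <= B * ((2 ^ m * (2 ^ m) ^ S)%:R - 2).
Proof.
move=> hB hq.
rewrite G_rec pair_big /=.
rewrite (bigD1 (E0, F0)) //= (bigD1 (E0, F1)) /=; last by rewrite xpair_eqE eqxx /= F10.
set P := \prod_(w : W) tn R (q w).
set G0 := G R L (fun _ : W => 0%N).
have e0 : \prod_w tn R (D q 0 F0 w %% 2 ^ m) * G R L (fun w : W => (D q 0 F0 w %/ 2 ^ m)%N) = P * G0.
  congr (_ * _).
    apply: eq_bigr => w _; rewrite D0 modn_small //; exact: leq_trans (hq w) k0m.
  apply: G_ext => w; rewrite D0 divn_small //; exact: leq_trans (hq w) k0m.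
have e1 : \prod_w tn R (D q 0 F1 w %% 2 ^ m) * G R L (fun w : W => (D q 0 F1 w %/ 2 ^ m)%N) = - (P * G0).
  transitivity ((P * \prod_(w : W) tn R (Xw w)) * G0); last by rewrite /Xw pat mulrN1 mulNr.
  congr (_ * _).
    rewrite -big_split /=; apply: eq_bigr => w _.
    by rewrite modn_small ?D1_lt // D1 tn_split.
  by apply: G_ext => w; rewrite divn_small ?D1_lt.
rewrite e0 e1 addrA addrN add0r.
apply: (le_trans (ler_norm_sum _ _ _)).
apply: (@le_trans _ _ (\sum_(i | (i != (E0, F0)) && (i != (E0, F1))) B)).
  apply: ler_sum => p _; rewrite normrM.
  have -> : `|\prod_w tn R (D q p.1 p.2 w %% 2 ^ m)| = 1.
    by rewrite normr_prod; apply: big1 => w _; rewrite normr_tn.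
  rewrite mul1r; apply: hB; exact: Qok_step.
have hc : \sum_(p : 'I_(2 ^ m) * {ffun 'I_S -> 'I_(2 ^ m)}) B =
   B + (B + \sum_(i | (i != (E0, F0)) && (i != (E0, F1))) B).
  rewrite (bigD1 (E0, F0)) //= (bigD1 (E0, F1)) //=.
  by rewrite xpair_eqE eqxx /= F10.
move: hc; rewrite sumr_const card_prod card_ffun !card_ord => hc.
have -> : \sum_(i | (i != (E0, F0)) && (i != (E0, F1))) B = B *+ (2 ^ m * (2 ^ m) ^ S) - B - B.
  by rewrite hc; ring.
have -> : B * ((2 ^ m * (2 ^ m) ^ S)%:R - 2) = B *+ (2 ^ m * (2 ^ m) ^ S) - B - B.
  by rewrite mulrBr mulr_natr; ring.
exact: lexx.
Qed.
Lemma Giter j r q : Qok q ->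
  `|G R (j * m + r) q| <= (2 ^ r * (2 * 2 ^ r) ^ S)%:R * ((2 ^ m * (2 ^ m) ^ S)%:R - 2) ^+ j.
Proof.
elim: j q => [|j IH] q hq.
  by rewrite mul0n add0n expr0 mulr1; exact: G_triv.
have -> : (j.+1 * m + r = (j * m + r) + m)%N by rewrite mulSnr; lia.
rewrite exprSr mulrA; apply: step => // q' hq'; exact: IH.
Qed.
End Bound.


Lemma real_decay (R : realType) (th : R) (m : nat) : 0 < th < 1 -> (0 < m)%N ->
  let c := - ln th / (m%:R * ln 2) in
  0 < c /\ forall L j : nat, (L < j.+1 * m)%N -> th ^+ j <= th^-1 * (2 : R) `^ (- (c * L%:R)).
Proof.
move=> /andP[th0 th1] m0 c.
have l2 : 0 < ln (2 : R) by apply: ln_gt0; rewrite ltr1n.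
have lt : ln th < 0 by apply: ln_lt0; rewrite th0 th1.
have mR : 0 < (m%:R : R) by rewrite ltr0n.
split.
  by rewrite /c divr_gt0 ?oppr_gt0 // mulr_gt0.
move=> L j hL.
rewrite /powR (_ : ((2 : R) == 0) = false) ?pnatr_eq0 //=.
have -> : - (c * L%:R) * ln 2 = ln th * (L%:R / m%:R).
  rewrite /c; field; by rewrite (gt_eqF mR) (gt_eqF l2).
have -> : th ^+ j = expR (ln th * j%:R) by rewrite expRM_natr lnK // posrE.
have -> : th^-1 = expR (- ln th) by rewrite expRN lnK // posrE.
rewrite -expRD ler_expR.
have : (L%:R / m%:R <= j.+1%:R :> R).
  by rewrite ler_pdivrMr // -natrM ler_nat ltnW.
move=> h.
move: h; set x := L%:R / m%:R; set a := ln th => h.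
have hp : 0 <= ((j.+1)%:R - x) * (- a) by rewrite mulr_ge0 // ?subr_ge0 ?oppr_ge0 // ltW.
rewrite -addn1 natrD in hp *.

lra.
Qed.


Lemma numE (R : realType) (s L : nat) :
  (\sum_(n < 2 ^ L) \sum_(k : {ffun 'I_s -> 'I_(2 * 2 ^ L)} | admissible (2 ^ L) n%:Z (hvec k))
      \prod_(w : {ffun 'I_s -> bool}) tm R (corner n%:Z (hvec k) w))
  = G R L (fun _ : {ffun 'I_s -> bool} => 0%N).
Proof.
apply: eq_bigr => n _; rewrite big_mkcond /=; apply: eq_bigr => k _.
case: ifP => hadm.
  apply: eq_bigr => w _; rewrite addr0 /gL.
  by move/forallP: hadm => /(_ w) ->.
move/negbT: hadm => /forallPn [w hw].
by rewrite (bigD1 w) //= /gL addr0 (negbTE hw) mul0r.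
Qed.

Lemma s_lt s : (0 < s)%N -> (s.+1 <= 2 ^ s)%N.
Proof. by case: s => // s _; exact: ltn_expl. Qed.

Section Den.
Variables (s P : nat).
Hypothesis s0 : (0 < s)%N.
Let L := (P + s)%N.
Let M := (2 ^ L)%N.

Lemma PM : (2 ^ P <= M)%N. Proof. by rewrite /M /L leq_exp2l // leq_addr. Qed.
Lemma kM (f : 'I_(2 ^ P)) : (f + M < 2 * M)%N.
Proof. have := ltn_ord f; have := PM; lia. Qed.

Definition iotaP (p : 'I_(2 ^ P) * {ffun 'I_s -> 'I_(2 ^ P)}) : 'I_M * {ffun 'I_s -> 'I_(2 * M)} :=
  (widen_ord PM p.1, [ffun i => Ordinal (kM (p.2 i))]).

Lemma iotaP_inj : injective iotaP.
Proof.
move=> [a f] [b g] [hab hfg].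
congr pair; first exact: val_inj.
apply/ffunP => i; have := congr1 (fun F : {ffun 'I_s -> 'I_(2 * M)} => (F i : nat)) hfg; rewrite /= !ffunE /= => /addIn h.
exact: val_inj.
Qed.

Lemma den_ge : (2 ^ P * (2 ^ P) ^ s <=
  #|[set nk : 'I_M * {ffun 'I_s -> 'I_(2 * M)} | admissible M (nk.1 : nat)%:Z (hvec nk.2)]|)%N.
Proof.
have -> : (2 ^ P * (2 ^ P) ^ s = #|iotaP @: [set: 'I_(2 ^ P) * {ffun 'I_s -> 'I_(2 ^ P)}]|)%N.
  by rewrite card_imset ?cardsT ?card_prod ?card_ffun ?card_ord //; exact: iotaP_inj.
apply: subset_leq_card; apply/subsetP => x /imsetP [[a f] _ ->].
rewrite inE /=; apply/forallP => w.
have hc : corner a%:Z (hvec [ffun i => Ordinal (kM (f i))]) w = (a + \sum_(i < s) w i * f i)%N%:Z.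
  rewrite /corner /hvec PoszD Posz_sum; congr (_ + _); apply: eq_bigr => i _.
  by rewrite ffunE /= PoszD addrK PoszM.
rewrite hc lez_nat leq0n ltz_nat /=.
have h1 : (\sum_(i < s) w i * f i <= s * (2 ^ P).-1)%N.
  apply: (@leq_trans (\sum_(i < s) (2 ^ P).-1)); last by rewrite sum_nat_const card_ord.
  apply: leq_sum => i _; have := ltn_ord (f i); case: (w i) => /=; lia.
have h2 := ltn_ord a.
have h3 : (s.+1 * 2 ^ P <= M)%N by rewrite /M /L expnD mulnC leq_mul2l s_lt // orbT.
have h4 : (0 < 2 ^ P)%N by rewrite expn_gt0.
move: h1 h2 h3 h4; move: (\sum_(i < s) w i * f i)%N (nat_of_ord a) => S0 A; rewrite mulSn.
have := M; move: (2 ^ P)%N (M) => K M0 _; nia.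
Qed.
End Den.


Lemma natpow_bound (S m j P : nat) : (j * m <= P + S)%N ->
  ((2 ^ m * (2 ^ m) ^ S) ^ j <= (2 ^ P * (2 ^ P) ^ S) * 2 ^ (S * S.+1))%N.
Proof.
move=> h.
rewrite -!expnM -!expnD -expnM leq_exp2l //.
nia.
Qed.

Theorem corollary2p4 (R : realType) (s : nat) :
  (2 <= s)%N ->
  exists c : R, 0 < c /\
    exists C : R, exists L0 : nat, forall L : nat, (L0 <= L)%N ->
      `|A0 R s L| <= C * ((2 : R) `^ (- (c * L%:R))).
Proof.
case: s => [|s] // hs.
set S := s.+1.
set k0 := s.+3.
have hk0 : (s.+2 < 2 ^ k0)%N by exact: (ltn_trans (ltnSn _) (ltn_expl _ (ltnSn 1))).
set m := (k0 + S)%N.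
have m0 : (0 < m)%N by rewrite /m addnS.
set N := (2 ^ m * (2 ^ m) ^ S)%N.
have N4 : (4 <= N)%N.
  have h1 : (2 <= 2 ^ m)%N.
    by rewrite -{1}(expn1 2) leq_exp2l.
  have h2 : (2 ^ m <= (2 ^ m) ^ S)%N by rewrite /S expnS leq_pmulr // !expn_gt0.
  rewrite /N; nia.
have NR : (4 : R) <= N%:R by rewrite (ler_nat R 4 N).
set th : R := (N%:R - 2) / N%:R.
have th01 : 0 < th < 1.
  rewrite /th; apply/andP; split.
    by rewrite divr_gt0 //; lra.
  by rewrite ltr_pdivrMr ?mul1r; lra.
have [c0 hdec] := @real_decay R th m th01 m0.
exists (- ln th / (m%:R * ln 2)); split => //.
set Cmax : R := (2 ^ m * (2 * 2 ^ m) ^ S)%:R.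
set K2 : R := (2 ^ (S * S.+1))%:R.
exists (Cmax * K2 * th^-1), S => L hL.
have [P ->] : exists P, L = (P + S)%N by exists (L - S)%N; rewrite subnK.
set j := ((P + S) %/ m)%N.
set r := ((P + S) %% m)%N.
have hLjr : (P + S = j * m + r)%N by rewrite /j /r -divn_eq.
have hjm : (j * m <= P + S)%N by rewrite hLjr leq_addr.
have hlt : (P + S < j.+1 * m)%N by rewrite hLjr mulSnr ltn_add2l ltn_pmod.
have hr : (r < m)%N by rewrite ltn_pmod.
have hnum : `|G R (P + S) (fun _ : {ffun 'I_S -> bool} => 0%N)| <= Cmax * (N%:R - 2) ^+ j.
  rewrite hLjr.
  apply: (le_trans (@Giter R s k0 hk0 j r (fun _ => 0%N) _)); first by move=> w; rewrite /= expn_gt0.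
  have -> : ((2 ^ (k0 + s.+1) * (2 ^ (k0 + s.+1)) ^ s.+1)%:R : R) = N%:R by [].
  apply: ler_wpM2r; first by apply: exprn_ge0; rewrite subr_ge0 (le_trans _ NR) // ler_nat.
  rewrite /Cmax ler_nat.
  apply: leq_mul; first exact: (leq_pexp2l (isT : (0 < 2)%N) (ltnW hr)).
  rewrite leq_exp2r; last exact: ltn0Sn.
  exact: (leq_mul (leqnn 2) (leq_pexp2l (isT : (0 < 2)%N) (ltnW hr))).
set den := #|[set nk : 'I_(2 ^ (P + S)) * {ffun 'I_S -> 'I_(2 * 2 ^ (P + S))} |
         admissible (2 ^ (P + S)) (nk.1 : nat)%:Z (hvec nk.2)]|.
have hden : (((2 ^ P * (2 ^ P) ^ S)%N)%:R : R) <= den%:R by rewrite ler_nat; exact: den_ge.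
set Dl : R := ((2 ^ P * (2 ^ P) ^ S)%N)%:R.
have Dl0 : 0 < Dl by rewrite /Dl ltr0n muln_gt0 !expn_gt0.
have hNj : (N%:R : R) ^+ j <= Dl * K2.
  by rewrite -natrX -natrM ler_nat; exact: natpow_bound.
rewrite /A0 /= numE normrM normfV (ger0_norm (ler0n _ _)) -/den.
have hthN : (N%:R - 2) ^+ j = th ^+ j * (N%:R : R) ^+ j.
  by rewrite -exprMn /th divfK // gt_eqF //; lra.
have thj := hdec _ _ hlt.
have Cm0 : 0 <= Cmax by rewrite ler0n.
have K20 : 0 <= K2 by rewrite ler0n.
have thj0 : 0 <= th ^+ j by rewrite exprn_ge0 // ltW //; case/andP: th01.
apply: (@le_trans _ _ (`|G R (P + S) (fun=> 0%N)| / Dl)).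
  apply: ler_wpM2l; first exact: normr_ge0.
  by rewrite lef_pV2 ?posrE // (lt_le_trans Dl0 hden).
apply: (@le_trans _ _ (Cmax * (N%:R - 2) ^+ j / Dl)).
  by apply: ler_wpM2r; [rewrite invr_ge0 ltW | ].
rewrite hthN.
apply: (@le_trans _ _ (Cmax * K2 * th ^+ j)).
  rewrite ler_pdivrMr //.
  have -> : Cmax * (th ^+ j * N%:R ^+ j) = (Cmax * th ^+ j) * N%:R ^+ j by ring.
  have -> : Cmax * K2 * th ^+ j * Dl = (Cmax * th ^+ j) * (Dl * K2) by ring.
  by apply: ler_wpM2l => //; rewrite mulr_ge0.
have -> : Cmax * K2 / th * 2 `^ (- (- ln th / (m%:R * ln 2) * (P + S)%:R)) =
   Cmax * K2 * (th^-1 * 2 `^ (- (- ln th / (m%:R * ln 2) * (P + S)%:R))) by rewrite !mulrA.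
by apply: ler_wpM2l => //; rewrite mulr_ge0.
Qed.
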